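(* Let $a<b$, let $\alpha\in(0,1]$, let $k:[a,b]\to\mathbb{R}$ be a continuous nonnegative map, differentiable at every $t>a$, with $k(t)\neq 0$ and $k'(t)\neq 0$ whenever $t>a$. Let $f:[a,b]\to\mathbb{R}$ and let $t_0\in(a,b)$ with $t_0>0$. If $f$ is $\alpha$-differentiable at $t_0$, then $f$ is continuous at $t_0$.
   Context: For $k$ as in the claim, $f:[a,b]\to\mathbb{R}$, $\alpha\in(0,1]$ and $t\in(a,b)$, the generalized fractional derivative of $f$ of order $\alpha$ at $t$ is $$D^{\alpha}(f)(t)=f^{(\alpha)}(t):=\lim_{\varepsilon\to 0}\frac{f\left(t-k(t)+k(t)\,e^{\varepsilon\frac{(k(t))^{-\alpha}}{k'(t)}}\right)-f(t)}{\varepsilon},$$ and $f$ is called $\alpha$-differentiable at $t$ if this limit exists (for $|\varepsilon|$ small the argument of $f$ lies in $[a,b]$). *)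

(* Defs.v *)
From Stdlib Require Import Reals Lra.
From Coquelicot Require Import Coquelicot.
Open Scope R_scope.

Definition frac_arg (k : R -> R) (alpha t eps : R) : R :=
  t - k t + k t * exp (eps * Rpower (k t) (- alpha) / Derive k t).

(* Difference quotient whose limit (eps -> 0) is D^alpha(f)(t). *)
Definition frac_quot (k f : R -> R) (alpha t eps : R) : R :=
  (f (frac_arg k alpha t eps) - f t) / eps.

Definition alpha_differentiable (k f : R -> R) (alpha t : R) : Prop :=
  exists L : R, is_lim (frac_quot k f alpha t) 0 (Finite L).

(* Main.v *)
Require Import Defs.
From Stdlib Require Import Reals Lra.
From Coquelicot Require Import Coquelicot.
Open Scope R_scope.

Lemma is_lim_to_cont (f : R -> R) (x : R) : is_lim f x (f x) -> continuous f x.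
Proof.
  intros H P [eps HP].
  destruct (H (ball (f x) eps)) as [d Hd].
  { exists eps; auto. }
  exists d. intros y Hy. destruct (Req_dec y x) as [->|Hne].
  - apply HP, ball_center.
  - apply HP, Hd; auto.
Qed.

Theorem mainTheorem2 (a b alpha : R) (k f : R -> R) (t0 : R) :
  a < b ->
  0 < alpha <= 1 ->
  (forall t, a <= t <= b ->
     filterlim k (within (fun x => a <= x <= b) (locally t)) (locally (k t))) ->
  (forall t, a <= t <= b -> 0 <= k t) ->
  (forall t, a < t < b -> ex_derive k t) ->
  (forall t, a < t <= b -> k t <> 0) ->
  (forall t, a < t < b -> Derive k t <> 0) ->
  a < t0 < b ->
  0 < t0 ->
  alpha_differentiable k f alpha t0 ->
  continuous f t0.
Proof.
  intros Hab Halpha _ Hk0 _ Hkn Hdn Ht0 _ [L HL].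
  assert (HK : 0 < k t0).
  { destruct (Hk0 t0) as [H|H]; [lra|lra|]. exfalso; apply (Hkn t0); [lra|auto]. }
  set (K := k t0) in *.
  assert (HP : 0 < Rpower K (- alpha)) by (unfold Rpower; apply exp_pos).
  assert (HD : Derive k t0 <> 0) by (apply Hdn; lra).
  set (c := Rpower K (- alpha) / Derive k t0).
  assert (Hc : c <> 0).
  { unfold c. unfold Rdiv. apply Rmult_integral_contrapositive; split; [lra|].
    apply Rinv_neq_0_compat; auto. }
  set (g := fun e => t0 - K + K * exp (e * c)).
  assert (Hg : forall e, frac_arg k alpha t0 e = g e).
  { intro e. unfold frac_arg, g, c. fold K. do 3 f_equal. unfold Rdiv; ring. }
  assert (H1 : is_lim (fun e => f (g e)) 0 (f t0)).
  { assert (Hm : is_lim (fun e => f t0 + e * frac_quot k f alpha t0 e) 0 (f t0 + 0 * L)).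
    { apply (is_lim_plus _ _ _ (f t0) (0 * L)).
      - apply is_lim_const.
      - apply (is_lim_mult _ _ _ 0 L); [apply is_lim_id | exact HL | exact I].
      - reflexivity. }
    replace (f t0 + 0 * L) with (f t0) in Hm by ring.
    eapply is_lim_ext_loc; [|exact Hm].
    exists (mkposreal 1 Rlt_0_1). intros y _ Hy.
    unfold frac_quot. rewrite Hg. field. auto. }
  set (h := fun x => ln ((x - t0 + K) / K) / c).
  assert (H2 : is_lim h t0 0).
  { assert (Hh0 : h t0 = 0).
    { unfold h. replace ((t0 - t0 + K) / K) with 1 by (field; lra). rewrite ln_1. unfold Rdiv; ring. }
    rewrite <- Hh0. apply is_lim_continuity.
    apply continuity_pt_filterlim. apply (@ex_derive_continuous R_AbsRing R_NormedModule).
    unfold h. auto_derive. replace ((t0 + - t0 + K) * / K) with 1 by (field; lra). lra. }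
  assert (Hloc : locally t0 (fun y => 0 < y - t0 + K)).
  { exists (mkposreal K HK). intros y Hy. cbn in Hy. unfold ball in Hy; cbn in Hy.
    unfold AbsRing_ball, abs, minus, plus, opp in Hy; cbn in Hy.
    apply Rabs_lt_between in Hy. lra. }
  destruct Hloc as [d Hd].
  assert (H3 : is_lim (fun y => f (g (h y))) t0 (f t0)).
  { apply (is_lim_comp (fun e => f (g e)) h t0 (f t0) 0); auto.
    exists d. intros y Hy Hne. unfold h. intro Heq0. injection Heq0 as Heq.
    assert (Hu : 0 < y - t0 + K) by (apply Hd; auto).
    assert (Hl : ln ((y - t0 + K) / K) = 0).
    { replace (ln ((y - t0 + K) / K)) with (ln ((y - t0 + K) / K) / c * c) by (field; auto).
      rewrite Heq. ring. }
    destruct (Req_dec ((y - t0 + K) / K) 1) as [E|E].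
    - apply Hne. assert (y - t0 + K = K).
      { apply (Rmult_eq_reg_r (/ K)); [|apply Rinv_neq_0_compat; lra].
        unfold Rdiv in E. rewrite E. field. lra. }
      lra.
    - apply (ln_neq_0 _ E); auto. apply Rdiv_lt_0_compat; lra. }
  apply is_lim_to_cont.
  eapply is_lim_ext_loc; [|exact H3].
  exists d. intros y Hy _.
  assert (Hu : 0 < y - t0 + K) by (apply Hd; auto).
  f_equal. unfold g, h.
  replace (ln ((y - t0 + K) / K) / c * c) with (ln ((y - t0 + K) / K)) by (field; auto).
  rewrite exp_ln by (apply Rdiv_lt_0_compat; lra). field. lra.
Qed.
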